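(* Let $T\ge 0$ be the number of attacking rounds. If $T=0$, then the privacy leakage is $V_p=0$. Suppose $T>0$ and the assumptions in the context hold. Then $$V_p\ \ge\ \underline V_p:=1-\frac{c_b\Delta+c_bc_2T^{p-1}}{D},$$ and $V_p\le 1$; moreover, if $\Delta\ge\frac{2c_2c_b}{c_a}T^{p-1}$ or $\Delta\le\frac{c_ac_0}{2c_b}T^{p-1}$, then $$V_p\ \le\ \overline V_p:=1-\frac{c_a\Delta+c_ac_0T^{p-1}}{4D}.$$
   Context: A client has original private data $s_o$ and original gradient $w_o=g(s_o)$, where $g(s)=\partial\mathcal L(s,w)/\partial w$. The client releases a protected gradient $w_d$; let $s_d$ be data with $g(s_d)=w_d$, and let the protection extent be $\Delta=\|w_d-w_o\|=\|g(s_d)-g(s_o)\|$. A semi-honest attacker runs an optimization algorithm producing reconstructions $s_1,\dots,s_T$. Privacy leakage: $V_p=1-\frac1D\cdot\frac1T\sum_{t=1}^T\|s_t-s_o\|$ for $T>0$ and $V_p=0$ for $T=0$. Assumptions: constants $D,c_a,c_b,c_0,c_2>0$, $p\in(0,1)$; for all data $s_1,s_2$, $c_a\|g(s_1)-g(s_2)\|\le\|s_1-s_2\|\le c_b\|g(s_1)-g(s_2)\|$ (with $c_a\le c_b$); the regret bound $c_0T^p\le\sum_{t=1}^T\|g(s_t)-g(s_d)\|\le c_2T^p$ holds (with $c_0\le c_2$); $\|s_t-s_o\|\in[0,D]$ for all $t$; and $c_b+c_bc_2\le D$, $\frac{2c_2c_b}{c_a}\le D$. *)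

(* Defs.v *)
From HB Require Import structures.
From mathcomp Require Import all_boot all_order all_algebra.
From mathcomp Require Import all_classical all_reals all_analysis.
Set Implicit Arguments. Unset Strict Implicit. Unset Printing Implicit Defensive.
Import Order.TTheory GRing.Theory Num.Theory.
Import numFieldNormedType.Exports.
Local Open Scope ring_scope.

(* Privacy leakage V_p for reconstructions s_1..s_T (s : nat -> S, only
   indices 1..T are used), original data so, normalising constant D. *)
Definition privacy_leakage (R : realType) (S : normedModType R)
  (D : R) (T : nat) (s : nat -> S) (so : S) : R :=
  if T == 0%N then 0
  else 1 - D^-1 * (T%:R)^-1 * \sum_(1 <= t < T.+1) `|s t - so|.

(* Main.v *)
Require Import Defs.
From HB Require Import structures.
From mathcomp Require Import all_boot all_order all_algebra.
From mathcomp Require Import all_classical all_reals all_analysis.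
From mathcomp Require Import ring lra.
Import Order.TTheory GRing.Theory Num.Theory.
Import numFieldNormedType.Exports.
Local Open Scope ring_scope.

Theorem mainTheorem2 (R : realType) (S W : normedModType R) (g : S -> W)
  (so sd : S) (s : nat -> S) (T : nat) (D ca cb c0 c2 p : R) :
  (T = 0%N -> privacy_leakage D T s so = 0) /\
  ((0 < T)%N ->
   0 < D -> 0 < ca -> 0 < cb -> 0 < c0 -> 0 < c2 -> 0 < p -> p < 1 ->
   ca <= cb -> c0 <= c2 ->
   (forall s1 s2 : S, ca * `|g s1 - g s2| <= `|s1 - s2| /\
                      `|s1 - s2| <= cb * `|g s1 - g s2|) ->
   c0 * (T%:R `^ p) <= \sum_(1 <= t < T.+1) `|g (s t) - g sd| ->
   \sum_(1 <= t < T.+1) `|g (s t) - g sd| <= c2 * (T%:R `^ p) ->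
   (forall t, (1 <= t <= T)%N -> 0 <= `|s t - so| <= D) ->
   cb + cb * c2 <= D -> 2 * c2 * cb / ca <= D ->
   let Delta := `|g sd - g so| in
   let Vp := privacy_leakage D T s so in
   1 - (cb * Delta + cb * c2 * T%:R `^ (p - 1)) / D <= Vp /\
   Vp <= 1 /\
   (2 * c2 * cb / ca * T%:R `^ (p - 1) <= Delta \/
    Delta <= ca * c0 / (2 * cb) * T%:R `^ (p - 1) ->
    Vp <= 1 - (ca * Delta + ca * c0 * T%:R `^ (p - 1)) / (4 * D))).
Proof.
split; first by move=> ->; rewrite /privacy_leakage eqxx.
move=> T0 D0 ca0 cb0 c00 c20 p0 p1 cab c02 Hg HB1 HB2 _ _ _ Delta Vp.
set N := T%:R. set X := N `^ (p - 1).
have N0 : 0 < N by rewrite ltr0n.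
have X0 : 0 <= X by apply: powR_ge0.
have NX : N * X = N `^ p by apply: mulr_powRB1; [exact: ltW|].
rewrite -NX in HB1 HB2.
set A := \sum_(1 <= t < T.+1) `|s t - so|.
set B := \sum_(1 <= t < T.+1) `|g (s t) - g sd| in HB1 HB2 *.
have sc : \sum_(1 <= t < T.+1) Delta = N * Delta.
  by rewrite sumr_const_nat subSS subn0 -mulr_natr mulrC.
have up : A <= cb * B + cb * (N * Delta).
  rewrite -sc !mulr_sumr -big_split /=; apply: ler_sum => t _.
  rewrite -mulrDr; apply: le_trans (proj2 (Hg (s t) so)) _.
  rewrite ler_pM2l //; have -> : g (s t) - g so = (g (s t) - g sd) + (g sd - g so) by rewrite addrA subrK.
  exact: ler_normD.
have lo1 : ca * (N * Delta) - ca * B <= A.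
  rewrite -sc !mulr_sumr -sumrB; apply: ler_sum => t _.
  rewrite -mulrBr; apply: le_trans (proj1 (Hg (s t) so)).
  rewrite ler_pM2l //; rewrite lerBlDr.
  rewrite /Delta; have -> : g sd - g so = (g sd - g (s t)) + (g (s t) - g so) by rewrite addrA subrK.
  by apply: le_trans (ler_normD _ _) _; rewrite distrC addrC.
have lo2 : ca * B - ca * (N * Delta) <= A.
  rewrite -sc !mulr_sumr -sumrB; apply: ler_sum => t _.
  rewrite -mulrBr; apply: le_trans (proj1 (Hg (s t) so)).
  rewrite ler_pM2l //; rewrite lerBlDr.
  have -> : g (s t) - g sd = (g (s t) - g so) + (g so - g sd) by rewrite addrA subrK.
  by apply: le_trans (ler_normD _ _) _; rewrite [X in _ + X]distrC.
have A0 : 0 <= A by apply: sumr_ge0 => *.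
set Q := N^-1 * A.
have AQ : A = N * Q by rewrite /Q mulrA divff ?mul1r // gt_eqF.
have Q0 : 0 <= Q by rewrite /Q mulr_ge0 // invr_ge0 ltW.
have VpE : Vp = 1 - Q / D.
  rewrite /Vp /privacy_leakage; have -> : (T == 0%N) = false by move: T0; case: (T).
  by rewrite -/N -/A /Q; ring.
rewrite AQ in up lo1 lo2.
have D1 : D^-1 > 0 by rewrite invr_gt0.
have key : forall x y, x <= y -> 1 - y / D <= 1 - x / D.
  by move=> x y h; rewrite lerD2l lerN2 ler_pM2r.
have Delta0 : 0 <= Delta by rewrite /Delta normr_ge0.
split.
  rewrite VpE; apply: key.
  have : N * Q <= N * (cb * Delta + cb * c2 * X) by have := ler_wpM2l (ltW cb0) HB2; lra.
  by rewrite ler_pM2l.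
split.
  by rewrite VpE lerBlDr lerDl divr_ge0 // ltW.
move=> hcase.
rewrite VpE.
have -> : (ca * Delta + ca * c0 * X) / (4 * D) = ((ca * Delta + ca * c0 * X) / 4) / D.
  by field; rewrite gt_eqF.
apply: key.
case: hcase => h.
- have r1 : 1 <= cb / ca by rewrite ler_pdivlMr // mul1r.
  have h' : 2 * c2 * X <= Delta.
    apply: le_trans h; rewrite -[2 * c2 * X]mul1r.
    have e : 2 * c2 * cb / ca * X = cb / ca * (2 * c2 * X) by ring.
    rewrite e; apply: ler_wpM2r => //; nra.
  have m1 := ler_wpM2l (ltW ca0) HB2.
  have m2 : 0 <= ca * N * (3 * Delta - 4 * c2 * X - c0 * X).
    apply: mulr_ge0; first by apply: mulr_ge0; apply: ltW.
    have := ler_wpM2r X0 c02; lra.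
  have : N * ((ca * Delta + ca * c0 * X) / 4) <= N * Q by lra.
  by rewrite ler_pM2l.
- have q1 : ca / cb <= 1 by rewrite ler_pdivrMr // mul1r.
  have q0 : 0 <= ca / cb by rewrite divr_ge0 // ltW.
  have h' : 2 * Delta <= c0 * X.
    have e : ca * c0 / (2 * cb) * X = (ca / cb) * (c0 * X) / 2 by field; rewrite gt_eqF.
    rewrite e in h.
    have : 2 * Delta <= ca / cb * (c0 * X).
      by rewrite -ler_pdivlMl // mulrC.
    move=> h2; apply: le_trans h2 _; rewrite -[X in _ <= X]mul1r; apply: ler_wpM2r => //; nra.
  have m1 := ler_wpM2l (ltW ca0) HB1.
  have m2 : 0 <= ca * N * (3 * c0 * X - 5 * Delta).
    apply: mulr_ge0; first by apply: mulr_ge0; apply: ltW.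
    have := mulr_ge0 (ltW c00) X0; clear -h'; move=> ?; lra.
  have : N * ((ca * Delta + ca * c0 * X) / 4) <= N * Q by lra.
  by rewrite ler_pM2l.
Qed.
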